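(* Let $(\mathcal U,\mathcal F)$ be a strongly accessible set system satisfying the commutable property, let $P$ be a maximal solution and $w\in\mathcal U$. Let $S$ be a maximal solution that is not a root and satisfies $\mathrm{parent}'(S)=P$ and $\mathrm{pi}'(S)=w$. Then $w\notin P$, and there exist $R\in\mathrm{restr}(P,w)$ and $s\in R\cap Z$ with $s\neq w$ such that $$S=\mathrm{complete}'\big(\mathrm{complete}'(\{s\},R)|_w\cup\{w\},\ \mathcal U\big).$$
   Context: A set system is $(\mathcal U,\mathcal F)$ with $\mathcal U$ finite, $\mathcal F\subseteq 2^{\mathcal U}$, $\emptyset\in\mathcal F$; $S\in\mathcal F$ is maximal if no $Y\in\mathcal F$ has $S\subsetneq Y$. Strongly accessible: for all $X,Y\in\mathcal F$ with $X\subsetneq Y$ there is $z\in Y\setminus X$ with $X\cup\{z\}\in\mathcal F$. Commutable: for all $X,Y\in\mathcal F$ with $X\ne\emptyset$, $X\subsetneq Y$, $a,b\in Y\setminus X$, if $X\cup\{a\},X\cup\{b\}\in\mathcal F$ then $X\cup\{a,b\}\in\mathcal F$. Elements of $\mathcal U$ are distinct integers. $X^+_A=\{a\in A\setminus X: X\cup\{a\}\in\mathcal F\}$, $X^+=X^+_{\mathcal U}$. $Z=\{x:\{x\}\in\mathcal F\}$, $\mathrm{source}(X)=\min(X\cap Z)$. Layers: for $X\in\mathcal F$, $t\in X\cap Z$: $B_0=\{t\}$, $B_i=B_{i-1}\cup(B_{i-1}^+\cap X)$; for $y\in X\cup X^+$, $\mathrm{lay}^X_t(t)=0$ and for $y\ne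 t$, $\mathrm{lay}^X_t(y)=\min\{i\ge1:y\in B_{i-1}^+\}$; $\mathrm{lay}^X=\mathrm{lay}^X_{\mathrm{source}(X)}$. $\mathrm{choose}'(X,A)$ is the $y\in X^+_A$ minimizing $(\mathrm{lay}^X(y),y)$ lexicographically. $\mathrm{complete}'(X,A)$: while $X^+_A\neq\emptyset$, add $\mathrm{choose}'(X,A)$ to $X$; return $X$. The truncated version $\mathrm{complete}'(X,A)|_w$ runs the same loop but stops as soon as $\mathrm{choose}'(X,A)$ would return $w$, returning the current $X$ (so $w$ is not added). The layered canonical order of a nonempty maximal $S$: $s_1=\mathrm{source}(S)$, $s_{i+1}=\mathrm{choose}'(S[i],S)$ while $S[i]^+_S\ne\emptyset$, with $S[i]=\{s_1,\dots,s_i\}$. Let $j$ be the smallest index with $\mathrm{complete}'(S[j],\mathcal U)=S$; $S$ is a root if $j=1$; otherwise $\mathrm{pi}'(S)=s_j$, $\mathrm{core}'(S)=S[j-1]$ and $\mathrm{parent}'(S)=\mathrm{complete}'(\mathrm{core}'(S),\mathcal U)$. For a maximal solution $P$ and $w\in\mathcal U$, $\mathrm{restr}(P,w)$ is the set of all $R\in\mathcal F$ with $R\subseteq P\cup\{w\}$, $R\neq P$, that are maximal among members of $\mathcal F$ contained in $P\cup\{w\}$. *)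

(* Defs.v *)
From mathcomp Require Import all_boot.
Set Implicit Arguments. Unset Strict Implicit. Unset Printing Implicit Defensive.

(* The universe U is modelled as the finite type 'I_n, ordered by the values of
   its elements (any finite set of distinct integers is order-isomorphic to 'I_n
   with n = |U|, and only the order of elements is used). *)

Section SetSystem.
Variable n : nat.
Notation T := ('I_n).
Variable F : {set {set T}}.

Definition strongly_accessible : Prop :=
  forall X Y, X \in F -> Y \in F -> X \proper Y ->
    exists2 z, z \in Y :\: X & z |: X \in F.

Definition commutable : Prop :=
  forall X Y a b, X \in F -> Y \in F -> X != set0 -> X \proper Y ->
    a \in Y :\: X -> b \in Y :\: X -> a |: X \in F -> b |: X \in F ->
    a |: (b |: X) \in F.

Definition maximal (S : {set T}) : Prop :=
  S \in F /\ forall Y, Y \in F -> ~ (S \proper Y).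

Definition plus (X A : {set T}) : {set T} :=
  [set a in A :\: X | a |: X \in F].

Definition Zs : {set T} := [set x | [set x] \in F].

Definition source (X : {set T}) : option T :=
  [pick x in X :&: Zs | [forall y in X :&: Zs, (val x <= val y)%N]].

Definition layerB (t : T) (X : {set T}) (i : nat) : {set T} :=
  iter i (fun B => B :|: (plus B setT :&: X)) [set t].

(* The sets B_i stabilise by i = n, so it suffices to search i in [1, n+1];
   if no such i exists the (irrelevant) default value n+2 is returned. *)
Definition lay (t : T) (X : {set T}) (y : T) : nat :=
  if y == t then 0%N
  else (find (fun i => y \in plus (layerB t X i.-1) setT) (iota 1 n.+1)).+1.

Definition layX (X : {set T}) (y : T) : nat :=
  if source X is Some t then lay t X y else 0%N.

Definition lex_le (X : {set T}) (y z : T) : bool :=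
  (layX X y < layX X z)%N || ((layX X y == layX X z) && (val y <= val z)%N).

Definition choose' (X A : {set T}) : option T :=
  [pick y in plus X A | [forall z in plus X A, lex_le X y z]].

(* complete'(X, A): at most n additions can occur *)
Definition complete' (X A : {set T}) : {set T} :=
  iter n (fun Y => if choose' Y A is Some y then y |: Y else Y) X.

(* truncated complete'(X, A)|_w *)
Definition completeT (X A : {set T}) (w : T) : {set T} :=
  (iter n (fun p : {set T} * bool =>
     if p.2 then p else
     match choose' p.1 A with
     | Some y => if y == w then (p.1, true) else (y |: p.1, false)
     | None => (p.1, true)
     end) (X, false)).1.

Fixpoint canon_aux (S : {set T}) (fuel : nat) (X : {set T}) : seq T :=
  match fuel with
  | 0 => [::]
  | k.+1 => if choose' X S is Some y then y :: canon_aux S k (y |: X) else [::]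
  end.

Definition canon (S : {set T}) : seq T :=
  if source S is Some s then s :: canon_aux S n [set s] else [::].

Definition prefix (S : {set T}) (i : nat) : {set T} :=
  [set x in take i (canon S)].

Definition jidx (S : {set T}) : nat :=
  (find (fun k => complete' (prefix S k.+1) setT == S)
        (iota 0 (size (canon S)))).+1.

Definition is_root (S : {set T}) : bool := jidx S == 1%N.

Definition pi' (S : {set T}) : option T := onth (canon S) (jidx S).-1.

Definition core' (S : {set T}) : {set T} := prefix S (jidx S).-1.

Definition parent' (S : {set T}) : {set T} := complete' (core' S) setT.

Definition restr (P : {set T}) (w : T) : {set {set T}} :=
  [set R in F | [&& R \subset w |: P, R != P &
     [forall Y in F, (Y \subset w |: P) ==> ~~ (R \proper Y)]]].

End SetSystem.

(* Main.v *)
Require Import Defs.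
From mathcomp Require Import all_boot.
Set Implicit Arguments. Unset Strict Implicit. Unset Printing Implicit Defensive.

Section Th.
Variable n : nat.
Notation T := ('I_n).
Variable F : {set {set T}}.
Hypothesis SA : strongly_accessible F.
Hypothesis CM : commutable F.

Lemma inplus (X A : {set T}) (a : T) : (a \in plus F X A) = [&& a \notin X, a \in A & a |: X \in F].
Proof. by rewrite /plus !inE andbA. Qed.

Lemma Mlem k : forall (B B' Y : {set T}) (a : T), #|B' :\: B| = k ->
  B \subset B' -> B' \subset Y -> B \in F -> B' \in F -> Y \in F -> B != set0 ->
  a |: B \in F -> a \in Y -> a \notin B' -> a |: B' \in F.
Proof.
elim: k => [|k IH] B B' Y a Hc sBB' sB'Y FB FB' FY B0 FaB aY aB'.
  have : B' \subset B by rewrite -setD_eq0 -cards_eq0 Hc.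
  by move=> sB'B; have -> : B' = B by apply/eqP; rewrite eqEsubset sB'B sBB'.
have pBB' : B \proper B'.
  rewrite properEneq sBB' andbT; apply/eqP=> E; move: Hc; by rewrite E setDv cards0.
have [z zD FzB] := SA FB FB' pBB'.
have aB : a \notin B by apply/negP=> aB; move/negP: aB'; apply; exact: (subsetP sBB').
have pBY : B \proper Y.
  apply: (proper_sub_trans pBB') sB'Y.
move: (zD); rewrite inE => /andP [zB zB'].
have FazB : a |: (z |: B) \in F.
  apply: (CM FB FY B0 pBY); rewrite ?inE ?aB ?aY ?zB //=.
  exact: (subsetP sB'Y).
apply: (IH (z |: B) B' Y) => //.
- rewrite (_ : B' :\: (z |: B) = (B' :\: B) :\ z); last first.
    by apply/setP=> x; rewrite !inE; case: (x == z); rewrite ?andbF ?andbT //= andbC.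
  rewrite (cardsD1 z (B' :\: B)) in Hc; by rewrite zD in Hc; case: Hc.
- by rewrite subUset sub1set zB' sBB'.
- by apply/set0Pn; exists z; rewrite !inE eqxx.
Qed.

Lemma M (B B' Y : {set T}) (a : T) : B \subset B' -> B' \subset Y -> B \in F -> B' \in F -> Y \in F -> B != set0 ->
  a |: B \in F -> a \in Y -> a \notin B' -> a |: B' \in F.
Proof. exact: (@Mlem _ B B' Y a erefl). Qed.


Lemma Cm_gen k : forall (B X D : {set T}), #|D| = k -> B \in F -> B != set0 -> B \subset X -> X \in F ->
  D \subset plus F B setT :&: X -> B :|: D \in F.
Proof.
elim: k => [|k IH] B X D Hc FB B0 sBX FX sD.
  by move: Hc => /eqP; rewrite cards_eq0 => /eqP ->; rewrite setU0.
have [a aD] : exists a, a \in D.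
  by apply/set0Pn; rewrite -cards_eq0 Hc.
have Ha := subsetP sD a aD; rewrite inE inplus in Ha.
case/andP: Ha => /and3P [aB _ FaB] aX.
have -> : B :|: D = a |: (B :|: D :\ a).
  apply/setP=> x; rewrite !inE; case: (eqVneq x a) => [->|]; by rewrite ?aD ?orbT.
have FD' : B :|: D :\ a \in F.
  apply: (IH _ X) => //.
    by move: Hc; rewrite (cardsD1 a D) aD => -[].
  by apply: subset_trans sD; apply: subsetDl.
apply: (@M B _ X a) => //.
- exact: subsetUl.
- by rewrite subUset sBX /=; apply: subset_trans (subsetDl _ _) (subset_trans sD (subsetIr _ _)).
- by rewrite !inE negb_or aB eqxx.
Qed.

Lemma Cm (B X : {set T}) : B \in F -> B != set0 -> B \subset X -> X \in F ->
  B :|: (plus F B setT :&: X) \in F.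
Proof. move=> *; exact: (@Cm_gen _ B X) => //. Qed.

Lemma layer_props (t : T) (X : {set T}) i : X \in F -> t \in X -> [set t] \in F ->
  [/\ layerB F t X i \in F, layerB F t X i \subset X & t \in layerB F t X i].
Proof.
move=> FX tX Ft; elim: i => [|i [IH1 IH2 IH3]] /=.
  by rewrite /layerB /= Ft sub1set tX inE.
rewrite /layerB /= -/(layerB F t X i); split.
- apply: Cm => //; by apply/set0Pn; exists t.
- by rewrite subUset IH2 subsetIr.
- by rewrite inE IH3.
Qed.


Lemma layerS t X i : layerB F t X i.+1 = layerB F t X i :|: (plus F (layerB F t X i) setT :&: X).
Proof. by []. Qed.

Lemma layer_mono (t : T) (X X' : {set T}) i : X \in F -> X' \in F -> X \subset X' -> t \in X -> [set t] \in F ->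
  layerB F t X i \subset layerB F t X' i.
Proof.
move=> FX FX' sXX' tX Ft; have tX' := subsetP sXX' t tX.
elim: i => [|i IH]; first by [].
rewrite !layerS; apply/subsetP=> x; rewrite !in_setU !in_setI => /orP [xB|/andP [xp xX]].
  by rewrite (subsetP IH x xB).
case xB': (x \in layerB F t X' i) => //=.
have [FB sBX tB] := layer_props i FX tX Ft.
have [FB' sB'X tB'] := layer_props i FX' tX' Ft.
move: xp; rewrite inplus => /and3P [xB _ FxB].
rewrite (subsetP sXX' x xX) inplus xB' /= andbT.
rewrite inE /=. apply: (@M (layerB F t X i) _ X') => //; last by rewrite xB'.
- by apply/set0Pn; exists t.
- exact: (subsetP sXX').
Qed.

Lemma layer_unch (t a : T) (X : {set T}) K :
  (forall k, k < K -> a \notin plus F (layerB F t X k) setT) ->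
  forall k, k <= K -> layerB F t (a |: X) k = layerB F t X k.
Proof.
move=> H; elim=> [|k IH] Hk; first by [].
rewrite !layerS IH ?(ltnW Hk) //; congr (_ :|: _).
apply/setP=> x; rewrite !in_setI in_setU1; case: (eqVneq x a) => [->|] //=.
by rewrite (negbTE (H k Hk)).
Qed.

Lemma layer_stab (t : T) (X : {set T}) : X \in F -> t \in X -> [set t] \in F ->
  layerB F t X n = X.
Proof.
move=> FX tX Ft.
have H : forall i, layerB F t X i = X \/ i < #|layerB F t X i|.
  elim=> [|i IH]; first by right; rewrite /layerB /= cards1.
  have [FB sBX tB] := layer_props i FX tX Ft.
  case: IH => [E|lt].
    left; rewrite layerS E; apply/setP=> x; rewrite in_setU in_setI inplus.
    by case: (x \in X); rewrite ?andbF.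
  case: (eqVneq (layerB F t X i) X) => [E|NE].
    left; rewrite layerS E; apply/setP=> x; rewrite in_setU in_setI inplus.
    by case: (x \in X); rewrite ?andbF.
  right.
  have pBX : layerB F t X i \proper X by rewrite properEneq NE sBX.
  have [z zD FzB] := SA FB FX pBX.
  move: zD; rewrite inE => /andP [zB zX].
  apply: (leq_ltn_trans lt); apply: proper_card; rewrite layerS properEneq subsetUl andbT.
  apply/eqP=> E.
  have : z \in layerB F t X i :|: (plus F (layerB F t X i) setT :&: X).
    by rewrite in_setU in_setI zX inplus zB FzB in_setT orbT.
  by rewrite -E (negbTE zB).
case: (H n) => // lt; exfalso.
move: (max_card (mem (layerB F t X n))); rewrite card_ord => le.
by move: (leq_trans lt le); rewrite ltnn.
Qed.


Section Lay.
Variables (t : T) (X : {set T}) (y : T).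
Hypothesis yt : y != t.
Let p := fun i => y \in plus F (layerB F t X i.-1) setT.

Lemma layE : lay F t X y = (find p (iota 1 n.+1)).+1.
Proof. by rewrite /lay (negbTE yt). Qed.

Lemma lay_max : lay F t X y <= n.+2.
Proof. by rewrite layE ltnS; have := find_size p (iota 1 n.+1); rewrite size_iota. Qed.

Lemma lay_le m : 0 < m <= n.+1 -> y \in plus F (layerB F t X m.-1) setT -> lay F t X y <= m.
Proof.
case/andP=> m0 mn Hy; rewrite layE.
case: m m0 mn Hy => // m _ mn Hy.
rewrite ltnS leqNgt; apply/negP=> lt.
have := before_find 0 lt; rewrite nth_iota // add1n.
by rewrite /p /= Hy.
Qed.

Lemma lay_in : lay F t X y <= n.+1 -> y \in plus F (layerB F t X (lay F t X y).-1) setT.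
Proof.
rewrite layE => le.
have lt : find p (iota 1 n.+1) < size (iota 1 n.+1) by rewrite size_iota.
have := nth_find 0 (a := p) (s := iota 1 n.+1); rewrite has_find => /(_ lt).
by rewrite /p nth_iota -?size_iota // add1n.
Qed.

Lemma lay_notin k : 0 < k < lay F t X y -> y \notin plus F (layerB F t X k.-1) setT.
Proof.
rewrite layE; case: k => // k /andP [_]; rewrite ltnS => lt.
have kn : k < n.+1.
  apply: (leq_trans lt); have := find_size p (iota 1 n.+1); by rewrite size_iota.
have := before_find 0 lt; rewrite nth_iota // add1n /p /=.
by move=> ->.
Qed.

End Lay.


Definition keyle (p q : nat * nat) := (p.1 < q.1) || ((p.1 == q.1) && (p.2 <= q.2)).

Lemma keyle_trans p q r : keyle p q -> keyle q r -> keyle p r.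
Proof.
case: p => a b; case: q => c d; case: r => e f; rewrite /keyle /=.
case/orP=> [h1|/andP [/eqP <- h1]]; case/orP=> [h2|/andP [/eqP <- h2]].
- by rewrite (ltn_trans h1 h2).
- by rewrite h1.
- by rewrite h2.
- by rewrite eqxx (leq_trans h1 h2) orbT.
Qed.

Lemma keyle_total p q : keyle p q || keyle q p.
Proof.
case: p => a b; case: q => c d; rewrite /keyle /=.
case: (ltngtP a c) => //= _; case: (leqP b d) => //= h; exact: ltnW.
Qed.

Lemma lay_addable (t y : T) (X A : {set T}) : X \in F -> t \in X -> [set t] \in F ->
  y \in plus F X A -> lay F t X y <= n.+1.
Proof.
move=> FX tX Ft; rewrite inplus => /and3P [yX _ FyX].
have yt : y != t by apply/eqP=> E; move: yX; rewrite E tX.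
apply: lay_le => //; first by rewrite leqnn.
by rewrite /= layer_stab // inplus yX FyX in_setT.
Qed.

Lemma lay_mono (t b : T) (X X' Y : {set T}) : X \in F -> X' \in F -> Y \in F ->
  X \subset X' -> X' \subset Y -> t \in X -> [set t] \in F -> b \in Y -> b \notin X' ->
  lay F t X' b <= lay F t X b.
Proof.
move=> FX FX' FY sXX' sX'Y tX Ft bY bX'.
have tX' := subsetP sXX' t tX.
have bt : b != t by apply/eqP=> E; move: bX'; rewrite E tX'.
have := lay_max X bt; rewrite leq_eqVlt => /orP [/eqP ->|]; first exact: lay_max.
rewrite ltnS => le.
set m := lay F t X b in le *.
have m0 : 0 < m by rewrite /m layE.
have := lay_in bt le; rewrite -/m => Hb.
apply: lay_le => //; first by rewrite m0 le.
have [FB sBX tB] := layer_props m.-1 FX tX Ft.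
have [FB' sB'X tB'] := layer_props m.-1 FX' tX' Ft.
have sBB' := layer_mono m.-1 FX FX' sXX' tX Ft.
move: Hb; rewrite !inplus !in_setT /= => /andP [bB FbB].
have bB' : b \notin layerB F t X' m.-1.
  by apply/negP=> h; move: bX'; rewrite (subsetP sB'X b h).
rewrite bB' /=.
apply: (@M (layerB F t X m.-1) _ Y) => //.
- exact: subset_trans sB'X sX'Y.
- by apply/set0Pn; exists t.
Qed.


Lemma lay_step (t a b : T) (X Y : {set T}) : X \in F -> Y \in F -> X \subset Y -> t \in X -> [set t] \in F ->
  a \in plus F X Y -> (forall z, z \in plus F X Y -> keyle (lay F t X a, val a) (lay F t X z, val z)) ->
  b \in plus F (a |: X) Y -> keyle (lay F t X a, val a) (lay F t (a |: X) b, val b).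
Proof.
move=> FX FY sXY tX Ft Ha Hmin Hb.
have Ln := lay_addable FX tX Ft Ha.
move: (Ha) (Hb); rewrite !inplus => /and3P [aX aY FaX] /and3P [baX bY FbaX].
have at' : a != t by apply/eqP=> E; move: aX; rewrite E tX.
have bX : b \notin X by move: baX; rewrite in_setU1 negb_or => /andP [].
have bt : b != t by apply/eqP=> E; move: bX; rewrite E tX.
set L := lay F t X a in Ln Hmin *.
set m := lay F t (a |: X) b.
case: (ltnP L m) => [lt|le]; first by rewrite /keyle /= lt.
have mn : m <= n.+1 by apply: leq_trans le Ln.
have m0 : 0 < m by rewrite /m layE.
have L0 : 0 < L by rewrite /L layE.
have Hb' := lay_in bt mn; rewrite -/m in Hb'.
have E : layerB F t (a |: X) m.-1 = layerB F t X m.-1.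
  apply: (@layer_unch _ _ _ L.-1).
    move=> k lt; apply: (@lay_notin t X a at' k.+1).
    by rewrite /= -/L; move: lt; case: (L) L0 => // L' _; rewrite ltnS.
  by case: (m) m0 le => // m' _; case: (L) L0 => // L' _ /=.
rewrite E in Hb'.
have [FB sBX tB] := layer_props m.-1 FX tX Ft.
have bXY : b \in plus F X Y.
  rewrite inplus bX bY /=.
  move: Hb'; rewrite inplus => /and3P [bB _ FbB].
  apply: (@M (layerB F t X m.-1) _ Y) => //.
  by apply/set0Pn; exists t.
have lb : lay F t X b <= m.
  by apply: lay_le => //; rewrite m0.
have := Hmin b bXY; rewrite /keyle /=.
case/orP=> [lt|/andP [/eqP Eq ab]].
  by have := leq_trans lt (leq_trans lb le); rewrite ltnn.
have Em : L = m by apply/eqP; rewrite eqn_leq le andbT Eq lb.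
by rewrite Em eqxx ab orbT.
Qed.


Lemma iter_fix (f : {set T} -> {set T}) (X : {set T}) :
  (forall Y : {set T}, Y \subset f Y) -> f (iter n f X) = iter n f X.
Proof.
move=> ext.
have H : forall i, iter i.+1 f X = iter i f X \/ i < #|iter i.+1 f X|.
  elim=> [|i IH] /=.
    case: (eqVneq (f X) X) => [->|NE]; first by left.
    right; apply: (@leq_ltn_trans #|X|) => //; apply: proper_card.
    by rewrite properEneq eq_sym NE ext.
  case: IH => [E|lt].
    by left; rewrite /= -[in RHS]E.
  case: (eqVneq (iter i.+2 f X) (iter i.+1 f X)) => [E|NE]; first by left.
  right; apply: leq_ltn_trans lt (proper_card _).
  by rewrite properEneq eq_sym NE ext.
case: (H n) => [E|lt]; first by rewrite -[in RHS]E.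
exfalso; move: (max_card (mem (iter n.+1 f X))); rewrite card_ord => le.
by move: (leq_ltn_trans le lt); rewrite ltnn.
Qed.

Notation stepc A := (fun Y => if choose' F Y A is Some y then y |: Y else Y).

Lemma stepc_ext (A Y : {set T}) : Y \subset stepc A Y.
Proof. rewrite /=; case: (choose' F Y A) => [y|]; [exact: subsetU1 | exact: subxx]. Qed.

Lemma compl_fix (X A : {set T}) : stepc A (complete' F X A) = complete' F X A.
Proof. exact: (iter_fix X (@stepc_ext A)). Qed.

Lemma compl_sub (X A : {set T}) : X \subset complete' F X A.
Proof.
have H : forall k, X \subset iter k (stepc A) X.
  elim=> [|k IH] //=; exact: subset_trans IH (stepc_ext _ _).
exact: H.
Qed.

Lemma compl_step (X A : {set T}) (a : T) : choose' F X A = Some a -> complete' F (a |: X) A = complete' F X A.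
Proof.
move=> E; have -> : a |: X = stepc A X by rewrite E.
by rewrite /complete' -iterSr /= compl_fix.
Qed.

Lemma compl_in (X A : {set T}) (a : T) : choose' F X A = Some a -> a \in complete' F X A.
Proof.
move=> E; rewrite -(compl_step E); apply: (subsetP (compl_sub _ _)).
by rewrite in_setU1 eqxx.
Qed.


Lemma choose_some (X A : {set T}) (a : T) : choose' F X A = Some a ->
  a \in plus F X A /\ (forall z, z \in plus F X A -> lex_le F X a z).
Proof.
rewrite /choose'; case: pickP => // x /andP [xin /forall_inP H] [<-]; split => //.
Qed.

Lemma lex_antisym (X : {set T}) (y z : T) : lex_le F X y z -> lex_le F X z y -> y = z.
Proof.
rewrite /lex_le; case: (ltngtP (layX F X y) (layX F X z)) => //= _ h1 h2.
by apply: val_inj; apply/eqP; rewrite eqn_leq h1 h2.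
Qed.

Lemma lex_mu (X : {set T}) (y z : T) :
  lex_le F X y z = (layX F X y * n + val y <= layX F X z * n + val z).
Proof.
have yn := ltn_ord y; have zn := ltn_ord z.
rewrite /lex_le; case: (ltngtP (layX F X y) (layX F X z)) => h /=.
- symmetry; apply/idP; apply: (@leq_trans (layX F X y * n + n)).
    by rewrite leq_add2l ltnW.
  by rewrite -mulSnr; apply: leq_trans (leq_addr _ _); rewrite leq_mul2r h orbT.
- symmetry; apply/negbTE; rewrite -ltnNge.
  apply: (@leq_trans (layX F X z * n + n)); first by rewrite ltn_add2l.
  by rewrite -mulSnr; apply: leq_trans (leq_addr _ _); rewrite leq_mul2r h orbT.
- by rewrite h leq_add2l.
Qed.

Lemma choose_eq (X A : {set T}) (a : T) : a \in plus F X A ->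
  (forall z, z \in plus F X A -> lex_le F X a z) -> choose' F X A = Some a.
Proof.
move=> aP H; rewrite /choose'; case: pickP => [x /andP [xin /forall_inP Hx]|].
  by congr Some; apply: lex_antisym; [apply: Hx | apply: H].
by move/(_ a); rewrite aP /=; move/negP; case; apply/forall_inP.
Qed.

Lemma choose_ex (X A : {set T}) (z : T) : z \in plus F X A -> exists a, choose' F X A = Some a.
Proof.
move=> zP.
case: (@arg_minnP _ z (mem (plus F X A)) (fun y => layX F X y * n + val y) zP) => a aP H.
exists a; apply: choose_eq => // y yP; rewrite lex_mu; exact: H.
Qed.

Lemma compl_F (X A : {set T}) : X \in F -> complete' F X A \in F.
Proof.
move=> FX; have H : forall k, iter k (stepc A) X \in F.
  elim=> [|k IH] //=.
  case E: (choose' F _ A) => [y|] //.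
  by have [/[dup] + _ _] := choose_some E; rewrite inplus => /and3P [].
exact: H.
Qed.


Lemma source_some (S : {set T}) (s : T) : source F S = Some s ->
  [/\ s \in S, [set s] \in F & forall y, y \in S -> [set y] \in F -> val s <= val y].
Proof.
rewrite /source; case: pickP => // x /andP [xin /forall_inP H] [<-].
move: xin; rewrite !inE => /andP [xS xZ]; split => // y yS yZ.
by apply: H; rewrite !inE yS.
Qed.

Lemma source_sub (S X : {set T}) (s : T) : source F S = Some s -> s \in X -> X \subset S ->
  source F X = Some s.
Proof.
move=> Hs sX sXS; have [sS Fs Hmin] := source_some Hs.
rewrite /source; case: pickP => [x /andP [xin /forall_inP H]|].
  congr Some; apply: val_inj; apply/eqP; rewrite eqn_leq.
  move: xin; rewrite !inE => /andP [xX xZ].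
  rewrite Hmin ?(subsetP sXS) // andbT; apply: H; by rewrite !inE sX.
move/(_ s); rewrite !inE sX Fs /= => /negP; case; apply/forall_inP => y.
rewrite !inE => /andP [yX yZ]; apply: Hmin => //; exact: (subsetP sXS).
Qed.

Lemma caux_spec (S : {set T}) (x0 : T) k : forall X : {set T},
  (forall m, m < size (canon_aux F S k X) ->
     choose' F (X :|: [set x in take m (canon_aux F S k X)]) S = Some (nth x0 (canon_aux F S k X) m)) /\
  [/\ uniq (canon_aux F S k X), all (fun x => x \notin X) (canon_aux F S k X) &
       all (fun x => x \in S) (canon_aux F S k X)].
Proof.
elim: k => [|k IH] X; first by [].
case E: (choose' F X S) => [y|]; last by rewrite /= E.
have -> : canon_aux F S k.+1 X = y :: canon_aux F S k (y |: X) by rewrite /= E.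
have [IH1 [IH2 IH3 IH4]] := IH (y |: X).
move: IH1 IH2 IH3 IH4; set l := canon_aux F S k (y |: X) => IH1 IH2 IH3 IH4; clearbody l.
have [yP _] := choose_some E; move: yP; rewrite inplus => /and3P [yX yS _].
split.
  case=> [|m].
    move=> _; rewrite (_ : [set x in take 0 (y :: l)] = set0); first by rewrite setU0 E.
    apply/setP=> x; rewrite take0 !inE; done.
  rewrite [size _]/= ltnS => lt.
  rewrite [nth _ _ _]/= [take _ _]/= -(IH1 m lt); congr choose'.
  by apply/setP=> x; rewrite !inE orbA [(x == y) || _]orbC.
split.
- rewrite [uniq _]/= IH2 andbT; apply/negP=> yl.
  by move/allP: IH3 => /(_ y yl); rewrite in_setU1 eqxx.
- rewrite [all _ _]/= yX andTb; apply/allP=> x xl; move/allP: IH3 => /(_ x xl).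
  by rewrite in_setU1 negb_or => /andP [].
- by rewrite [all _ _]/= yS IH4.
Qed.


Section Canon.
Variables (S : {set T}) (s : T).
Hypothesis FS : S \in F.
Hypothesis Hs : source F S = Some s.
Local Notation c := (canon F S).
Local Notation Pre := (Defs.prefix F S).
Local Notation l := (canon_aux F S n [set s]).

Lemma cE : c = s :: l.
Proof. by rewrite /canon Hs. Qed.

Lemma PreE m : Pre m.+1 = [set s] :|: [set x in take m l].
Proof. by rewrite /Defs.prefix cE; apply/setP=> x; rewrite !inE. Qed.

Lemma c_spec1 i : 0 < i < size c -> choose' F (Pre i) S = Some (nth s c i).
Proof.
case: i => // m; rewrite cE /= ltnS => lt.
rewrite PreE; have [H _] := caux_spec S s n [set s]; exact: H.
Qed.

Lemma c_uniq : uniq c.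
Proof.
rewrite cE; have [_ [H1 H2 _]] := caux_spec S s n [set s].
rewrite cons_uniq H1 andbT; apply/negP=> sl.
by move/allP: H2 => /(_ s sl); rewrite in_set1 eqxx.
Qed.

Lemma c_sub x : x \in c -> x \in S.
Proof.
rewrite cE in_cons => /orP [/eqP ->|xl]; first by have [] := source_some Hs.
have [_ [_ _ H3]] := caux_spec S s n [set s]; exact: (allP H3).
Qed.

Lemma c_size : size c <= n.
Proof.
rewrite -(card_uniqP c_uniq); move: (max_card (mem c)); by rewrite card_ord.
Qed.

Lemma Pre_sub i : Pre i \subset S.
Proof. by apply/subsetP=> x; rewrite inE => /mem_take; exact: c_sub. Qed.

Lemma Pre_Snth i : i < size c -> Pre i.+1 = nth s c i |: Pre i.
Proof.
move=> lt; rewrite /Defs.prefix (take_nth s lt); apply/setP=> x.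
by rewrite !inE mem_rcons in_cons.
Qed.

Lemma Pre_s i : 0 < i -> s \in Pre i.
Proof. by case: i => // i _; rewrite PreE !inE eqxx. Qed.

Lemma Pre_src i : 0 < i -> source F (Pre i) = Some s.
Proof. by move=> i0; apply: (source_sub Hs (Pre_s i0) (Pre_sub i)). Qed.

Lemma Pre_mono i k : i <= k -> Pre i \subset Pre k.
Proof.
move=> le; apply/subsetP=> x; rewrite !inE -(take_takel c le); exact: mem_take.
Qed.

Lemma nth_Pre i k : i < k -> i < size c -> nth s c i \in Pre k.
Proof.
move=> ik ic; rewrite inE -(nth_take s ik); apply: mem_nth.
by rewrite size_take_min leq_min ik ic.
Qed.

Lemma layX_Pre i y : 0 < i -> layX F (Pre i) y = lay F s (Pre i) y.
Proof. by move=> i0; rewrite /layX Pre_src. Qed.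

Lemma Pre_F i : 0 < i <= size c -> Pre i \in F.
Proof.
elim: i => // i IH /andP [_ le].
case: i IH le => [|i] IH le.
  by rewrite PreE (_ : [set x in take 0 l] = set0) ?setU0; [have [] := source_some Hs|
      apply/setP=> x; rewrite take0 !inE].
have lt : i.+1 < size c by [].
have := c_spec1 (i := i.+1); rewrite lt => /(_ isT) /choose_some [].
by rewrite inplus (Pre_Snth lt) => /and3P [].
Qed.

Lemma c_plus i : 0 < i < size c ->
  nth s c i \in plus F (Pre i) S /\
  forall z, z \in plus F (Pre i) S ->
    keyle (lay F s (Pre i) (nth s c i), val (nth s c i)) (lay F s (Pre i) z, val z).
Proof.
case/andP=> i0 ic; have [H1 H2] := choose_some (c_spec1 (i := i) (introT andP (conj i0 ic))).
split => // z zP; have := H2 z zP; rewrite /lex_le !layX_Pre //.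
Qed.

Lemma Fs : [set s] \in F.
Proof. by have [] := source_some Hs. Qed.

Lemma chain i d : 0 < i -> i.+1 + d <= size c -> forall b, b \in plus F (Pre (i.+1 + d)) S ->
  keyle (lay F s (Pre i) (nth s c i), val (nth s c i)) (lay F s (Pre (i.+1 + d)) b, val b).
Proof.
move=> i0; elim: d => [|d IH] le b bP.
  rewrite addn0 in le bP *.
  have [Ha Hmin] := c_plus (i := i) (introT andP (conj i0 le)).
  rewrite (Pre_Snth le) in bP *.
  apply: (lay_step (Pre_F _) FS (Pre_sub i) (Pre_s i0) Fs Ha Hmin bP).
  by rewrite i0 ltnW.
rewrite addnS in le bP *.
set k := i.+1 + d in le bP IH *.
have k0 : 0 < k by rewrite /k addSn.
have [Hk Hkmin] := c_plus (i := k) (introT andP (conj k0 le)).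
apply: keyle_trans (IH (ltnW le) _ Hk) _.
rewrite (Pre_Snth le) in bP *.
apply: (lay_step (Pre_F _) FS (Pre_sub k) (Pre_s k0) Fs Hk Hkmin bP).
by rewrite k0 ltnW.
Qed.

Variable j : nat.
Hypothesis Hj : j <= size c.
Hypothesis Hcj : complete' F (Pre j) setT = S.

Lemma core i (Y : {set T}) (y : T) : 0 < i -> i < j -> Y \in F -> Pre j \subset Y -> y \in Y ->
  y \notin S -> y |: Pre i \in F ->
  keyle (lay F s (Pre i) (nth s c i), val (nth s c i)) (lay F s (Pre i) y, val y).
Proof.
move=> i0 ij FY sY yY yS FyP.
have j0 : 0 < j by apply: leq_ltn_trans ij.
have FPi : Pre i \in F by apply: Pre_F; rewrite i0 (leq_trans (ltnW ij) Hj).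
have FPj : Pre j \in F by apply: Pre_F; rewrite j0 Hj.
have yPj : y \notin Pre j by apply/negP=> h; move: yS; rewrite (subsetP (Pre_sub j) y h).
have sij := Pre_mono (ltnW ij).
have yj : y \in plus F (Pre j) setT.
  rewrite inplus yPj in_setT /=.
  apply: (@M (Pre i) _ Y) => //.
  by apply/set0Pn; exists s; apply: Pre_s.
have [p Ep] := choose_ex yj.
have [pP pmin] := choose_some Ep.
have pS : p \in S by rewrite -Hcj; exact: compl_in Ep.
have pPS : p \in plus F (Pre j) S by move: pP; rewrite !inplus pS => /and3P [-> _ ->].
have h1 := chain (d := j - i.+1) i0.
rewrite subnKC // in h1; have {h1} h1 := h1 Hj p pPS.
have h2 : keyle (lay F s (Pre j) p, val p) (lay F s (Pre j) y, val y).
  by move: (pmin y yj); rewrite /lex_le /keyle /= !layX_Pre.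
have h3 : lay F s (Pre j) y <= lay F s (Pre i) y.
  by apply: (lay_mono FPi FPj FY sij sY (Pre_s i0) Fs yY yPj).
apply: keyle_trans h1 (keyle_trans h2 _).
rewrite /keyle /=; move: h3; rewrite leq_eqVlt => /orP [/eqP ->|->] //.
by rewrite eqxx leqnn orbT.
Qed.

End Canon.


Definition hT (A : {set T}) (w : T) := (fun p : {set T} * bool =>
     if p.2 then p else
     match choose' F p.1 A with
     | Some y => if y == w then (p.1, true) else (y |: p.1, false)
     | None => (p.1, true)
     end).

Lemma completeTE (X A : {set T}) (w : T) : completeT F X A w = (iter n (hT A w) (X, false)).1.
Proof. by []. Qed.

Lemma hT_true (A Y : {set T}) (w : T) k : iter k (hT A w) (Y, true) = (Y, true).
Proof. by elim: k => //= k ->. Qed.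

Lemma hT_some (A Y : {set T}) (w y : T) : choose' F Y A = Some y -> y != w ->
  hT A w (Y, false) = (y |: Y, false).
Proof. by move=> E yw; rewrite /hT /= E (negbTE yw). Qed.

Lemma hT_w (A Y : {set T}) (w : T) : choose' F Y A = Some w -> hT A w (Y, false) = (Y, true).
Proof. by move=> E; rewrite /hT /= E eqxx. Qed.


Lemma main_in (P : {set T}) (w : T) (S : {set T}) : maximal F S -> ~~ is_root F S ->
  parent' F S = P -> pi' F S = Some w ->
  w \notin P /\
  exists2 R, R \in restr F P w &
    exists s, [/\ s \in R :&: Zs F, s != w &
      S = complete' F (w |: completeT F [set s] R w) setT].
Proof.
case=> FS _ nr Hp Hw.
case Es: (source F S) => [s|]; last by move: Hw; rewrite /pi' /canon Es onth0n.
set c := canon F S in Hw nr Hp *.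
set pr := (fun k => complete' F (Defs.prefix F S k.+1) setT == S).
set f := find pr (iota 0 (size c)).
have jE : jidx F S = f.+1 by [].
have Hw' : onth c f = Some w by move: Hw; rewrite /pi' jE.
have fc : f < size c by rewrite -onthTE Hw'.
have wE : nth s c f = w := @onth_nth _ s w c f Hw'.
have prf : pr f.
  have := nth_find 0 (a := pr) (s := iota 0 (size c)); rewrite has_find size_iota => /(_ fc).
  by rewrite -/f nth_iota.
have bf : forall k, k < f -> ~~ pr k.
  move=> k kf; have := before_find 0 (a := pr) (s := iota 0 (size c)) (i := k); rewrite -/f => /(_ kf).
  by rewrite nth_iota ?add0n ?(ltn_trans kf fc) // => ->.
case Ef : f => [|J] in jE Hw' fc wE prf bf.
  by move: nr; rewrite /is_root jE.
have prJ := bf J (ltnSn J).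
move/eqP: prf => Hcj.
have HP : complete' F (Defs.prefix F S J.+1) setT = P by rewrite -Hp /parent' /core' jE.
set Pre := Defs.prefix F S in Hcj HP prJ *.
have jc : J.+2 <= size c by [].
have cJ : J.+1 < size c by [].
have Hcore := core FS Es jc Hcj.
have FP : P \in F.
  rewrite -HP; apply: compl_F; apply: (@Pre_F S s Es); by rewrite /= ltnW.
have Pre_nth : forall i, i < size c -> Pre i.+1 = nth s c i |: Pre i.
  by move=> i ic; apply: (Pre_Snth s ic).
have minY : forall i (Y : {set T}) z, 0 < i -> i < J.+2 -> Y \in F -> Pre J.+2 \subset Y ->
    z \in plus F (Pre i) Y -> lex_le F (Pre i) (nth s c i) z.
  move=> i Y z i0 ij FY sY zP.
  have ic : i < size c by apply: leq_trans ij jc.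
  rewrite /lex_le !(layX_Pre Es) //.
  case zS: (z \in S).
    have [_ H] := c_plus Es (i := i) (introT andP (conj i0 ic)).
    apply: H; move: zP; rewrite !inplus zS => /and3P [-> _ ->] //.
  move: zP; rewrite inplus => /and3P [zPi zY FzP].
  exact: (Hcore i Y z i0 ij FY sY zY (negbT zS) FzP).
have EwS : choose' F (Pre J.+1) S = Some w.
  by rewrite -wE; apply: (c_spec1 Es).
have PreJ2 : Pre J.+2 = w |: Pre J.+1 by rewrite Pre_nth // wE.
have wnP : w \notin P.
  apply/negP=> wP.
  have [wPS _] := choose_some EwS.
  have wU : w \in plus F (Pre J.+1) setT by move: wPS; rewrite !inplus in_setT => /and3P [-> _ ->].
  have [q Eq] := choose_ex wU.
  have [qP qmin] := choose_some Eq.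
  have qw := qmin w wU.
  have qnw : q != w.
    apply/eqP=> E; move: prJ; rewrite /pr -/Pre.
    by rewrite -(compl_step Eq) E -PreJ2 Hcj eqxx.
  have sP : Pre J.+2 \subset P.
    rewrite PreJ2 subUset sub1set wP /= -HP; exact: compl_sub.
  have qPP : q \in plus F (Pre J.+1) P.
    move: qP; rewrite !inplus -HP (compl_in Eq) => /and3P [-> _ ->] //.
  have wq := minY J.+1 P q isT (ltnSn _) FP sP qPP.
  rewrite -wE in qw; by move: qnw; rewrite (lex_antisym qw wq) wE eqxx.
split => //.
set Q := fun R : {set T} => [&& R \in F, Pre J.+2 \subset R & R \subset w |: P].
have Qj : Q (Pre J.+2).
  rewrite /Q (Pre_F Es) // subxx /= PreJ2; apply: setUS; rewrite -HP; exact: compl_sub.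
case: (@arg_maxnP _ (Pre J.+2) Q (fun R => #|R|) Qj) => R /and3P [FR sjR sRP] Rmax.
have wR : w \in R by apply: (subsetP sjR); rewrite PreJ2 in_setU1 eqxx.
exists R.
  rewrite inE FR /= sRP /=; apply/andP; split.
    by apply/eqP=> E; move: wnP; rewrite -E wR.
  apply/forall_inP => Y FY; apply/implyP => sYP; apply/negP => pRY.
  have QY : Q Y by rewrite /Q FY sYP (subset_trans sjR (proper_sub pRY)).
  by have := leq_trans (proper_card pRY) (Rmax Y QY); rewrite ltnn.
exists s; split.
- rewrite in_setI (subsetP sjR) ?(Pre_s Es) // inE; exact: (Fs Es).
- have s0 : nth s c 0 = s by rewrite /c (cE Es).
  rewrite -s0 -wE nth_uniq //; [by apply: leq_ltn_trans cJ|by rewrite /c; apply: (c_uniq Es)].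
have chR : forall i, 0 < i < J.+2 -> choose' F (Pre i) R = Some (nth s c i).
  move=> i /andP [i0 ij]; have ic : i < size c by apply: leq_trans ij jc.
  have [ciP _] := c_plus Es (i := i) (introT andP (conj i0 ic)).
  apply: choose_eq.
    move: ciP; rewrite !inplus (subsetP sjR) ?(nth_Pre s ij ic) // => /and3P [-> _ ->] //.
  move=> z zP; exact: (minY i R z i0 ij FR sjR zP).
have iterm : forall m, m <= J -> iter m (hT R w) ([set s], false) = (Pre m.+1, false).
  elim=> [|m IH] mJ.
    by rewrite /= /Pre (PreE Es) (_ : [set x in take 0 _] = set0) ?setU0 //;
       apply/setP=> x; rewrite take0 !inE.
  rewrite iterS IH ?(ltnW mJ) //.
  have m1 : 0 < m.+1 < J.+2 by rewrite /= ltnS ltnW.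
  rewrite (hT_some (chR _ m1)); last first.
    rewrite -wE nth_uniq; [by rewrite eqSS neq_ltn mJ|exact: (leq_ltn_trans mJ (ltnW cJ))|exact: cJ|by rewrite /c; apply: (c_uniq Es)].
  by rewrite (Pre_nth m.+1 (leq_ltn_trans mJ (ltnW cJ))).
have iterJ : iter J.+1 (hT R w) ([set s], false) = (Pre J.+1, true).
  rewrite iterS iterm // hT_w //; rewrite -wE; apply: chR; by rewrite /= ltnSn.
have Jn : J.+1 <= n by apply: leq_trans (ltnW jc) (c_size Es).
have -> : completeT F [set s] R w = Pre J.+1.
  have := iterD (n - J.+1) J.+1 (hT R w) ([set s], false); rewrite subnK // iterJ hT_true => E.
  by rewrite completeTE E.
by rewrite -PreJ2 Hcj.
Qed.

End Th.

Theorem mainTheorem8 (n : nat) (F : {set {set 'I_n}}) :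
  set0 \in F -> strongly_accessible F -> commutable F ->
  forall (P : {set 'I_n}) (w : 'I_n), maximal F P ->
  forall S : {set 'I_n}, maximal F S -> ~~ is_root F S ->
  parent' F S = P -> pi' F S = Some w ->
  w \notin P /\
  exists2 R, R \in restr F P w &
    exists s, [/\ s \in R :&: Zs F, s != w &
      S = complete' F (w |: completeT F [set s] R w) setT].
Proof.
move=> _ SA CM P w _ S mS nr Hp Hw.
exact: (main_in SA CM mS nr Hp Hw).
Qed.
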